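(* Let $(\mathcal G,\mathcal D,\{\mathcal D_1,\ldots,\mathcal D_n\})$ be a minimal decomposition of a closed triangulated surface $\mathcal T$. Then every triangle of $\mathcal G$ intersects the boundary $\partial\mathcal G$ of $\mathcal G$.
   Context: A triangulated surface is a finite simplicial complex whose underlying space is a connected compact surface; it is closed if the surface has empty boundary; $\partial$ denotes the induced triangulation of the boundary. The valence of a vertex is the number of triangles containing it. A decomposition of a closed triangulated surface $\mathcal T$ is a triple $(\mathcal G,\mathcal D,\{\mathcal D_1,\ldots,\mathcal D_n\})$, $n\geq0$, of sub-triangulations (subcomplexes which are triangulated surfaces) of $\mathcal T$ such that $\mathcal D,\mathcal D_1,\ldots,\mathcal D_n$ are triangulated discs, the interior of $\mathcal D$ contains a vertex of maximal valence in $\mathcal T$, their union is $\mathcal T$, and any two of them intersect in a triangulated circle or not at all. A decomposition is minimal if the number of triangles of $\mathcal G$ is minimal among all decompositions of $\mathcal T$. *)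

(* Defs.v *)
From mathcomp Require Import all_boot.
Set Implicit Arguments. Unset Strict Implicit. Unset Printing Implicit Defensive.

(* A pure 2-dimensional finite simplicial complex on the vertex type V is
   represented by its set of triangles K : {set {set V}}; its faces are all
   nonempty subsets of its triangles. *)
Section Complexes.
Variable V : finType.
Implicit Types (K T : {set {set V}}) (v w : V).

Definition triangles_ok K : Prop := forall t, t \in K -> #|t| = 3.

Definition verts K : {set V} := \bigcup_(t in K) t.
Definition edges K : {set {set V}} :=
  [set e : {set V} | (#|e| == 2) && [exists t in K, e \subset t]].

Definition edge_deg K (e : {set V}) : nat := #|[set t in K | e \subset t]|.

Definition valence K v : nat := #|[set t in K | v \in t]|.

Definition bd_edges K : {set {set V}} := [set e in edges K | edge_deg K e == 1].
Definition bd_verts K : {set V} := \bigcup_(e in bd_edges K) e.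

Definition adj K : rel V := fun u w => [exists t in K, (u \in t) && (w \in t)].
Definition connected_cx K : Prop :=
  forall u w, u \in verts K -> w \in verts K -> connect (adj K) u w.

Definition link_verts K v : {set V} :=
  [set w | (w != v) && [exists t in K, (v \in t) && (w \in t)]].
Definition link_rel K v : rel V := fun a b =>
  [exists t in K, [&& v \in t, a \in t, b \in t, a != v, b != v & a != b]].

(* Combinatorial triangulated (connected, compact) surface, possibly with
   boundary: nonempty, pure 2-dimensional, connected, every edge lies in one
   or two triangles, and the link of every vertex is connected (hence, edges
   having degree <= 2, a path or a cycle). *)
Definition tri_surface K : Prop :=
  [/\ K != set0, triangles_ok K, connected_cx K,
      (forall e, e \in edges K -> edge_deg K e = 1 \/ edge_deg K e = 2) &
      (forall v a b, v \in verts K -> a \in link_verts K v -> b \in link_verts K v ->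
          connect (link_rel K v) a b)].

Definition closed_surface K : Prop := tri_surface K /\ bd_edges K = set0.

(* Triangulated disc: a triangulated surface with nonempty boundary and Euler
   characteristic  V - E + F = 1 (by the classification of compact surfaces
   this characterizes the disc). *)
Definition tri_disc K : Prop :=
  [/\ tri_surface K, bd_edges K != set0 &
      #|verts K| + #|K| = #|edges K| + 1].

Definition subtri K T : Prop := K \subset T /\ tri_surface K.

(* The intersection of the (face-closed) subcomplexes generated by K1 and K2:
   common vertices, common edges, common triangles. *)
Definition cx_disjoint K1 K2 : Prop := verts K1 :&: verts K2 = set0.
Definition cx_meet_circle K1 K2 : Prop :=
  let W := verts K1 :&: verts K2 in
  let E := edges K1 :&: edges K2 in
  [/\ K1 :&: K2 = set0, W != set0,
      (forall w, w \in W -> #|[set e in E | w \in e]| = 2) &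
      (forall u w, u \in W -> w \in W ->
         connect (fun a b => [exists e in E, [&& a \in e, b \in e & a != b]]) u w)].

Definition meet_ok K1 K2 : Prop := cx_disjoint K1 K2 \/ cx_meet_circle K1 K2.

Definition decomposition T G D (Ds : seq {set {set V}}) : Prop :=
  [/\ subtri G T /\ subtri D T, (forall Di, Di \in Ds -> subtri Di T),
      tri_disc D /\ (forall Di, Di \in Ds -> tri_disc Di),
      (exists2 v, v \in verts D :\: bd_verts D &
         forall w, valence T w <= valence T v) &
      G :|: D :|: \bigcup_(Di <- Ds) Di = T /\
      (let P := G :: D :: Ds in
       forall i j, i < j < size P -> meet_ok (nth set0 P i) (nth set0 P j))].

Definition minimal_decomposition T G D (Ds : seq {set {set V}}) : Prop :=
  decomposition T G D Ds /\
  (forall G' D' Ds', decomposition T G' D' Ds' -> #|G| <= #|G'|).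

End Complexes.

(* Main.v *)
Require Import Defs.
From mathcomp Require Import all_boot.
Set Implicit Arguments. Unset Strict Implicit. Unset Printing Implicit Defensive.

Section Proof.
Variable V : finType.
Implicit Types (K G T X : {set {set V}}) (t u s e : {set V}) (v w x y : V).

Lemma card3_set v x y : v != x -> v != y -> x != y -> #|[set v; x; y]| = 3.
Proof.
move=> vx vy xy; rewrite setUC !cardsU1 cards1 !inE.
by rewrite (negbTE vx) ![y == _]eq_sym (negbTE xy) (negbTE vy).
Qed.

Lemma card3_eq u v x y : #|u| = 3 -> v \in u -> x \in u -> y \in u ->
  v != x -> v != y -> x != y -> u = [set v; x; y].
Proof.
move=> c3 vu xu yu vx vy xy; apply/eqP; rewrite eq_sym eqEcard c3 card3_set //.
by rewrite andbT; apply/subsetP => z; rewrite !inE => /orP [/orP [] |] /eqP ->.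
Qed.

Lemma link_sym K v : symmetric (link_rel K v).
Proof.
move=> a b; rewrite /link_rel; apply/existsP/existsP => -[u /and4P [uK vu au /and4P [bu av bv ab]]];
 by exists u; rewrite uK vu au bu av bv eq_sym ab.
Qed.

Lemma vertsP K w : reflect (exists2 u, u \in K & w \in u) (w \in verts K).
Proof. exact: bigcupP. Qed.

Lemma edgesP K e : reflect (#|e| = 2 /\ exists2 u, u \in K & e \subset u) (e \in edges K).
Proof.
rewrite inE; apply: (iffP andP) => [[/eqP c /existsP [u /andP [uK eu]]]|[c [u uK eu]]].
  by split => //; exists u.
by split; [apply/eqP | apply/existsP; exists u; rewrite uK].
Qed.

Lemma edge_lock T G e : G \subset T -> tri_surface T -> e \in edges G ->
  edge_deg G e = 2 -> forall s, s \in T -> e \subset s -> s \in G.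
Proof.
move=> GT [_ _ _ dT _] eG d2 s sT es.
have eT : e \in edges T.
  by case/edgesP: eG => c [u uG eu]; apply/edgesP; split => //; exists u => //; apply: (subsetP GT).
have sub : [set s in G | e \subset s] \subset [set s in T | e \subset s].
  by apply/subsetP => z; rewrite !inE => /andP [zG ->]; rewrite (subsetP GT).
have : [set s in G | e \subset s] == [set s in T | e \subset s].
  rewrite eqEcard sub /=; move: d2; rewrite /edge_deg => ->.
  by case: (dT e eT); rewrite /edge_deg => ->.
move/eqP => E; have : s \in [set s in T | e \subset s] by rewrite inE sT.
by rewrite -E inE => /andP [].
Qed.

Lemma int_deg G v e : tri_surface G -> v \notin bd_verts G -> e \in edges G ->
  v \in e -> edge_deg G e = 2.
Proof.
move=> [_ _ _ dG _] vb eG ve; case: (dG e eG) => // d1.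
case/negP: vb; apply/bigcupP; exists e => //; by rewrite inE eG d1.
Qed.



Section Star.
Variables (T G : {set {set V}}) (v : V).
Hypotheses (GT : G \subset T) (sT : tri_surface T) (sG : tri_surface G)
  (vG : v \in verts G) (vb : v \notin bd_verts G).

Lemma other u w : #|u| = 3 -> exists2 a, a \in u & a != w.
Proof.
move=> c3; case: (set_0Vmem (u :\ w)) => [E | [a]].
  by move: c3; rewrite (cardsD1 w) E cards0; case: (w \in u).
by rewrite !inE => /andP [aw au]; exists a.
Qed.

Definition Pe x := (x != v) && ([set v; x] \in edges G).

Lemma Pe_step x y u : u \in T -> v \in u -> x \in u -> y \in u -> y != v ->
  Pe x -> Pe y.
Proof.
move=> uT vu xu yu yv /andP [xv eG].
have d2 := int_deg sG vb eG (setU11 v [set x]).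
have uG : u \in G.
  apply: (edge_lock GT sT eG d2 uT).
  by apply/subsetP => z; rewrite !inE => /orP [] /eqP ->.
rewrite /Pe yv /=; apply/edgesP; split; first by rewrite cards2 eq_sym yv.
by exists u => //; apply/subsetP => z; rewrite !inE => /orP [] /eqP ->.
Qed.

Lemma star s : s \in T -> v \in s -> s \in G.
Proof.
move=> sTT vs.
have [_ tT _ _ lT] := sT; have [_ tG _ _ _] := sG.
case/vertsP: vG => t0 t0G vt0.
have [a at0 av] := other v (tG _ t0G).
have [b bs bv] := other v (tT _ sTT).
have Pa : Pe a.
  rewrite /Pe av /=; apply/edgesP; split; first by rewrite cards2 eq_sym av.
  by exists t0 => //; apply/subsetP => z; rewrite !inE => /orP [] /eqP ->.
have vT : v \in verts T by apply/vertsP; exists s.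
have aL : a \in link_verts T v.
  rewrite inE av; apply/existsP; exists t0; rewrite (subsetP GT) //=. by rewrite vt0.
have bL : b \in link_verts T v.
  rewrite inE bv; apply/existsP; exists s; by rewrite sTT vs.
have cl : closed (link_rel T v) [pred x | Pe x].
  move=> x y /existsP [u /and4P [uT vu xu /and4P [yu xv yv xy]]]; rewrite !inE.
  by apply/idP/idP; [apply: Pe_step yu yv | apply: Pe_step xu xv].
have := closed_connect cl (lT v a b vT aL bL); rewrite !inE Pa => /esym /andP [_ eG].
have d2 := int_deg sG vb eG (setU11 v [set b]).
apply: (edge_lock GT sT eG d2 sTT).
by apply/subsetP => z; rewrite !inE => /orP [] /eqP ->.
Qed.

End Star.
Lemma even_sym (X : finType) (F : X -> X -> nat) :
  (forall (x y : X), F x y = F y x) -> (forall x : X, F x x = 0) ->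
  ~~ odd (\sum_(x : X) \sum_(y : X) F x y).
Proof.
move=> Fs F0; rewrite pair_bigA /=.
pose r (p : X * X) := enum_rank p.1 < enum_rank p.2.
rewrite (bigID r) /=.
rewrite [X in _ + X](bigID (fun p : X * X => enum_rank p.2 < enum_rank p.1)) /=.
rewrite [X in _ + (_ + X)]big1; last first.
  move=> [x y] /= /andP [h1 h2].
  have : enum_rank x = enum_rank y.
    rewrite /r /= in h1; apply: val_inj; apply/eqP.
    by rewrite eqn_leq leqNgt h2 leqNgt h1.
  by move/enum_rank_inj => ->.
rewrite addn0 [X in _ + X](reindex_inj (h := fun p : X * X => (p.2, p.1))); last first.
  by move=> [a b] [c d] [-> ->].
rewrite /= [X in _ + X](eq_bigl (fun p => r p)); last first.
  move=> [x y] /=; rewrite /r /=; case: ltngtP => //.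
rewrite [X in _ + X](eq_bigr (fun p => F p.1 p.2)); last by move=> [x y] _; exact: Fs.
by rewrite addnn odd_double.
Qed.

Section Remove.
Variables (G : {set {set V}}) (t : {set V}).
Hypotheses (sG : tri_surface G) (tG : t \in G)
  (tint : forall w, w \in t -> w \notin bd_verts G).
Let G' := G :\ t.

Lemma tri3 u : u \in G -> #|u| = 3.
Proof. by case: sG => _ h _ _ _; apply: h. Qed.

Lemma other2 u x y : #|u| = 3 -> x \in u -> y \in u -> x != y ->
  exists2 z, z \in u & (z != x) && (z != y).
Proof.
move=> c3 xu yu xy; case: (set_0Vmem (u :\ x :\ y)) => [E | [z]].
  move: c3; rewrite (cardsD1 x) (cardsD1 y (u :\ x)) E cards0 xu !inE eq_sym xy yu.
  by [].
by rewrite !inE => /and3P [zy zx zu]; exists z; rewrite // zx zy.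
Qed.

Lemma link_remove v x y : link_rel G v x y ->
  link_rel G' v x y \/ [/\ v \in t, x \in t & y \in t].
Proof.
case/existsP => u /and4P [uG vu xu /and4P [yu xv yv xy]].
case: (eqVneq u t) => [ut | ut]; first by right; rewrite -ut.
by left; apply/existsP; exists u; rewrite /G' !inE ut uG vu xu yu xv yv xy.
Qed.

Lemma link_sub v x y : link_rel G' v x y -> link_rel G v x y.
Proof.
case/existsP => u /and4P [uG vu xu /and4P [yu xv yv xy]].
move: uG; rewrite /G' !inE => /andP [_ uG].
by apply/existsP; exists u; rewrite uG vu xu yu xv yv xy.
Qed.

Lemma other_tri e : e \subset t -> #|e| = 2 -> exists2 u, u \in G' & e \subset u.
Proof.
move=> et c2.
have eG : e \in edges G by apply/edgesP; split => //; exists t.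
case: (set_0Vmem e) => [E | [w we]]; first by move: c2; rewrite E cards0.
have d2 := int_deg sG (tint (subsetP et w we)) eG we.
move: d2; rewrite /edge_deg (cardsD1 t) inE tG et /=.
case: (set_0Vmem ([set t0 in G | e \subset t0] :\ t)) => [-> | [u]]; first by rewrite cards0.
by rewrite !inE => /and3P [ut uG eu] _; exists u; rewrite // /G' !inE ut.
Qed.

Section Par.
Variables (v a b : V).
Hypotheses (vt : v \in t) (at_ : a \in t) (bt : b \in t)
  (va : v != a) (vb : v != b) (ab : a != b).
Let L := link_rel G v.
Let L' := link_rel G' v.

Lemma t_eq : t = [set v; a; b].
Proof. exact: card3_eq (tri3 tG) vt at_ bt va vb ab. Qed.

Lemma degN x : x \in link_verts G v -> #|[set y | L x y]| = 2.
Proof.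
rewrite inE => /andP [xv /existsP [u /and3P [uG vu xu]]].
have eG : [set v; x] \in edges G.
  apply/edgesP; split; first by rewrite cards2 eq_sym xv.
  by exists u => //; apply/subsetP => z; rewrite !inE => /orP [] /eqP ->.
have d2 := int_deg sG (tint vt) eG (setU11 v [set x]).
have inj : {in [set y | L x y] &, injective (fun y => [set v; x; y])}.
  move=> y1 y2; rewrite !inE => /existsP [u1 /and4P [_ _ _ /and4P [_ _ y1v xy1]]] _ E.
  have : y1 \in [set v; x; y2] by rewrite -E !inE eqxx orbT.
  by rewrite !inE (negbTE y1v) eq_sym (negbTE xy1) /= => /eqP.
rewrite -(card_in_imset inj) -d2 /edge_deg; apply: eq_card => s.
apply/imsetP/idP.
  move=> [y]; rewrite inE => /existsP [u1 /and4P [u1G vu1 xu1 /and4P [yu1 _ yv xy]]] ->.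
  rewrite -(card3_eq (tri3 u1G) vu1 xu1 yu1) ?(eq_sym v) // inE u1G /=.
  by apply/subsetP => z; rewrite !inE => /orP [] /eqP ->.
rewrite inE => /andP [sG' /subsetP es].
have vs : v \in s by apply: es; rewrite !inE eqxx.
have xs : x \in s by apply: es; rewrite !inE eqxx orbT.
have vx : v != x by rewrite eq_sym.
have [z zs /andP [zv zx]] := other2 (tri3 sG') vs xs vx.
exists z; last by apply: card3_eq => //; [exact: tri3 | rewrite eq_sym zv | rewrite eq_sym zx].
rewrite inE; apply/existsP; exists s; by rewrite sG' vs xs zs xv zv eq_sym zx.
Qed.

Lemma degN' x : x \in link_verts G v -> x \notin t -> #|[set y | L' x y]| = 2.
Proof.
move=> xL xt; rewrite -(degN xL); apply: eq_card => y; rewrite !inE.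
apply/idP/idP; first exact: link_sub.
by case/link_remove => // [[_ xt' _]]; rewrite xt' in xt.
Qed.

Lemma Lab : L a b.
Proof. by apply/existsP; exists t; rewrite tG vt at_ bt eq_sym va eq_sym vb ab. Qed.

Lemma degNa : #|[set y | L' a y]| = 1.
Proof.
have aL : a \in link_verts G v.
  by rewrite inE eq_sym va; apply/existsP; exists t; rewrite tG vt at_.
have := degN aL; rewrite (cardsD1 b) inE Lab.
have -> : [set y | L a y] :\ b = [set y | L' a y]; last by case.
apply/setP => y; rewrite !inE; apply/andP/idP.
  move=> [yb Lay]; case: (link_remove Lay) => // [[_ _ yt]].
  move: Lay => /existsP [u /and4P [_ _ _ /and4P [_ _ yv ay]]].
  move: yt; rewrite t_eq !inE (negbTE yv) (negbTE yb) eq_sym (negbTE ay).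
  by [].
move=> L'ay; split; last exact: link_sub.
apply/eqP => yb; move: L'ay; rewrite yb => /existsP [u /and4P [uG vu au /and4P [bu _ _ _]]].
move: uG; rewrite /G' !inE => /andP [/eqP ut uG]; apply: ut.
by rewrite t_eq; apply: card3_eq => //; apply: tri3.
Qed.
Lemma conn_ab : connect L' a b.
Proof.
apply/idPn => nab.
pose C := [set y | connect L' a y].
have aL : a \in link_verts G v.
  by rewrite inE eq_sym va; apply/existsP; exists t; rewrite tG vt at_.
have CL : forall y, y \in C -> y \in link_verts G v.
  move=> y; rewrite inE => cy.
  have cl : closed L' [pred z | z \in link_verts G v].
    move=> x z /link_sub /existsP [u /and4P [uG vu xu /and4P [zu xv zv _]]].
    rewrite !inE xv zv /=.
    by apply/idP/idP => _; apply/existsP; exists u; rewrite uG vu ?xu ?zu.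
  by move: (closed_connect cl cy); rewrite -!topredE /= => <-.
pose F x y := nat_of_bool ((x \in C) && L' x y).
have key : forall x y, (x \in C) && L' x y -> (y \in C) && L' y x.
  move=> x y /andP [xC Lxy]; apply/andP; split; last by move: Lxy; rewrite /L' link_sym.
  by move: xC; rewrite !inE => /connect_trans; apply; apply: connect1.
have Fs : forall x y, F x y = F y x.
  by move=> x y; rewrite /F; congr nat_of_bool; apply/idP/idP; apply: key.
have F0 : forall x, F x x = 0.
  move=> x; rewrite /F; case: (x \in C) => //=.
  by case: (L' x x) / idP => // /existsP [u /and4P [_ _ _ /and4P [_ _ _]]]; rewrite eqxx.
have := even_sym Fs F0.
have E1 : forall x, \sum_y F x y = (x \in C) * #|[set y | L' x y]|.
  move=> x; rewrite /F; case: (x \in C) => /=; last by rewrite big1.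
  rewrite mul1n -sum1_card [RHS]big_mkcond /=; apply: eq_bigr => y _; rewrite inE.
  by case: (L' x y).
rewrite (eq_bigr (fun x => (x \in C) * #|[set y | L' x y]|)); last by move=> x _; exact: E1.
rewrite (bigD1 a) //= degNa inE connect0 mul1n.
rewrite (eq_bigr (fun x => (x \in C) * 2)); last first.
  move=> x xa; case xC: (x \in C) => //.
  rewrite degN' ?CL //; rewrite t_eq !inE.
  have := CL x xC; rewrite inE => /andP [xv _].
  rewrite (negbTE xv) (negbTE xa) /=.
  by apply/negP => /eqP xb; move: xC; rewrite inE xb (negbTE nab).
by rewrite -big_distrl /= muln2 oddD odd_double.
Qed.

End Par.

Lemma G'sub : G' \subset G.
Proof. by apply/subsetP => u; rewrite /G' !inE => /andP []. Qed.

Lemma linkv_sub v c : c \in link_verts G' v -> c \in link_verts G v.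
Proof.
rewrite !inE => /andP [cv /existsP [u /andP [uG h]]]; rewrite cv.
by apply/existsP; exists u; rewrite (subsetP G'sub).
Qed.

Lemma verts_sub w : w \in verts G' -> w \in verts G.
Proof. by case/vertsP => u uG wu; apply/vertsP; exists u => //; apply: (subsetP G'sub). Qed.

Lemma link_conn' v c d : v \in verts G' -> c \in link_verts G' v ->
  d \in link_verts G' v -> connect (link_rel G' v) c d.
Proof.
move=> vG cL dL.
have [_ _ _ _ lG] := sG.
have := lG v c d (verts_sub vG) (linkv_sub cL) (linkv_sub dL).
apply: connect_sub => x y Lxy.
case: (link_remove Lxy) => [L'xy | [vt xt yt]]; first exact: connect1.
move: Lxy => /existsP [u /and4P [_ _ _ /and4P [_ xv yv xy]]].
by apply: conn_ab; rewrite // eq_sym.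
Qed.

Lemma pair_other x z : x \in t -> z \in t -> x != z ->
  exists2 u, u \in G' & (x \in u) && (z \in u).
Proof.
move=> xt zt xz.
have [u uG' /subsetP sub] : exists2 u, u \in G' & [set x; z] \subset u.
  apply: other_tri; last by rewrite cards2 xz.
  by apply/subsetP => w; rewrite !inE => /orP [] /eqP ->.
by exists u => //; rewrite !sub // !inE eqxx ?orbT.
Qed.

Lemma adj' x y : adj G x y -> adj G' x y.
Proof.
case/existsP => u /and3P [uG xu yu].
case: (eqVneq u t) => [ut | ut]; last first.
  by apply/existsP; exists u; rewrite /G' !inE ut uG xu yu.
subst u.
case: (eqVneq x y) => [<- | xy].
  have [z zt zx] := other x (tri3 tG).
  have xz : x != z by rewrite eq_sym.
  have [u uG' /andP [xu' _]] := pair_other xu zt xz.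
  by apply/existsP; exists u; rewrite uG' xu'.
have [u uG' /andP [xu' yu']] := pair_other xu yu xy.
by apply/existsP; exists u; rewrite uG' xu' yu'.
Qed.

Lemma G'_ne : G' != set0.
Proof.
have [x xt] : exists x, x \in t.
  by case: (set_0Vmem t) => [E | [x xt]]; [move: (tri3 tG); rewrite E cards0 | exists x].
have [z zt zx] := other x (tri3 tG).
have xz : x != z by rewrite eq_sym.
have [u uG' _] := pair_other xt zt xz.
by apply/set0Pn; exists u.
Qed.

Lemma deg' e : e \in edges G' -> edge_deg G' e = 1 \/ edge_deg G' e = 2.
Proof.
move=> eG'.
have eG : e \in edges G.
  by case/edgesP: eG' => c [u uG eu]; apply/edgesP; split => //; exists u => //; apply: (subsetP G'sub).
have Eq : [set s in G' | e \subset s] = [set s in G | e \subset s] :\ t.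
  by apply/setP => s; rewrite /G' !inE andbA.
case et: (e \subset t).
  case/edgesP: (eG) => c2 _.
  case: (set_0Vmem e) => [E | [w we]]; first by move: c2; rewrite E cards0.
  have d2 := int_deg sG (tint (subsetP et w we)) eG we.
  left; move: d2; rewrite /edge_deg Eq (cardsD1 t) inE tG et.
  by case.
have [_ _ _ dG _] := sG.
have -> : edge_deg G' e = edge_deg G e; last exact: dG.
rewrite /edge_deg Eq; apply: eq_card => s; rewrite !inE.
by case: (eqVneq s t) => [-> | ] //=; rewrite et andbF.
Qed.

Lemma surf' : tri_surface G'.
Proof.
have [_ tG3 cG _ _] := sG.
split.
- exact: G'_ne.
- by move=> u uG'; apply: tG3; apply: (subsetP G'sub).
- move=> x y xV yV; have := cG x y (verts_sub xV) (verts_sub yV).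
  by apply: connect_sub => p q /adj' /connect1.
- exact: deg'.
- by move=> v c d vV cL dL; apply: link_conn'.
Qed.


Lemma edge_tt x z : x \in t -> z \in t -> x != z ->
  [set x; z] \in edges G' :&: edges [set t].
Proof.
move=> xt zt xz; have [u uG' /andP [xu zu]] := pair_other xt zt xz.
have c2 : #|[set x; z]| = 2 by rewrite cards2 xz.
rewrite inE; apply/andP; split; apply/edgesP; split => //.
  by exists u => //; apply/subsetP => w; rewrite !inE => /orP [] /eqP ->.
by exists t; rewrite ?inE // ; apply/subsetP => w; rewrite !inE => /orP [] /eqP ->.
Qed.

Lemma verts1 : verts [set t] = t.
Proof. by rewrite /verts big_set1. Qed.

Lemma circle' : cx_meet_circle G' [set t].
Proof.
rewrite /cx_meet_circle verts1; split.
- by apply/setP => s; rewrite !inE; case: (eqVneq s t); rewrite ?andbF.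
- case: (set_0Vmem t) => [E | [x xt]]; first by move: (tri3 tG); rewrite E cards0.
  have [z zt zx] := other x (tri3 tG).
  have xz : x != z by rewrite eq_sym.
  have [u uG' /andP [xu _]] := pair_other xt zt xz.
  by apply/set0Pn; exists x; rewrite !inE xt andbT; apply/vertsP; exists u.
- move=> w; rewrite inE => /andP [_ wt].
  have [p pt pw] := other w (tri3 tG).
  have wp : w != p by rewrite eq_sym.
  have [q qt /andP [qw qp]] := other2 (tri3 tG) wt pt wp.
  have wq : w != q by rewrite eq_sym.
  have pq : p != q by rewrite eq_sym.
  have teq := card3_eq (tri3 tG) wt pt qt wp wq pq.
  have -> : [set e in edges G' :&: edges [set t] | w \in e] = [set [set w; p]; [set w; q]].
    apply/setP => e; apply/idP/idP.
      rewrite inE in_setI => /andP [/andP [_ /edgesP [c2 [u]]]].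
      rewrite inE => /eqP -> /subsetP et we.
      have [z ze zw] : exists2 z, z \in e & z != w.
        case: (set_0Vmem (e :\ w)) => [E | [z]].
          by move: c2; rewrite (cardsD1 w) E cards0 we.
        by rewrite !inE => /andP [zw ze]; exists z.
      have wz : w != z by rewrite eq_sym.
      have ee : e = [set w; z].
        apply/eqP; rewrite eq_sym eqEcard c2 cards2 wz andbT.
        by apply/subsetP => y; rewrite !inE => /orP [] /eqP ->.
      have := et z ze; rewrite teq !inE (negbTE zw) /= => /orP [] /eqP zz.
        by rewrite ee zz eqxx.
      by rewrite ee zz eqxx orbT.
    rewrite in_setU !in_set1 => /orP [] /eqP ->.
      by rewrite in_set edge_tt // in_setU in_set1 eqxx.
    by rewrite in_set edge_tt // in_setU in_set1 eqxx.
  have ne : [set w; p] != [set w; q].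
    apply/negP => /eqP E.
    have : p \in [set w; q] by rewrite -E !inE eqxx orbT.
    by rewrite !inE (negbTE pw) /= => /eqP pq'; rewrite pq' eqxx in pq.
  by rewrite cards2 ne.
- move=> x y; rewrite !inE => /andP [_ xt] /andP [_ yt].
  case: (eqVneq x y) => [-> | xy]; first exact: connect0.
  apply: connect1; apply/existsP; exists [set x; y]; rewrite edge_tt // !inE !eqxx orbT /=.
  by rewrite xy.
Qed.

Lemma restrict X : (forall w, w \in t -> w \notin verts X) ->
  meet_ok G X -> meet_ok G' X.
Proof.
move=> tX [dis | [GX0 W0 deg conn]].
  left; apply/setP => w; move/setP: dis => /(_ w); rewrite !inE.
  by case: (w \in verts X); rewrite ?andbF ?andbT // => wG; apply/negbTE/negP => /verts_sub; rewrite wG.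
have WE : verts G' :&: verts X = verts G :&: verts X.
  apply/setP => w; rewrite !inE; case wX: (w \in verts X); rewrite ?andbF ?andbT //.
  apply/idP/idP; first exact: verts_sub.
  case/vertsP => u uG wu; apply/vertsP; exists u => //; rewrite /G' !inE uG andbT.
  by apply/eqP => ut; move: (tX w); rewrite -ut wu wX => /(_ isT).
have EE : edges G' :&: edges X = edges G :&: edges X.
  apply/setP => e; rewrite !in_setI; case eX: (e \in edges X); rewrite ?andbF ?andbT //.
  apply/idP/idP.
    by case/edgesP => c [u uG eu]; apply/edgesP; split => //; exists u => //; apply: (subsetP G'sub).
  case/edgesP => c [u uG eu]; apply/edgesP; split => //; exists u => //.
  rewrite /G' !inE uG andbT; apply/eqP => ut.
  case/edgesP: eX => _ [u' u'X eu'].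
  case: (set_0Vmem e) => [E | [w we]]; first by move: c; rewrite E cards0.
  have wX : w \in verts X by apply/vertsP; exists u' => //; apply: (subsetP eu').
  by move: (tX w); rewrite wX -ut (subsetP eu) // => /(_ isT).
right; rewrite /cx_meet_circle WE EE; split => //.
by apply/setP => s; move/setP: GX0 => /(_ s); rewrite !inE -andbA => ->; rewrite andbF.
Qed.

End Remove.

Section One.
Variable t : {set V}.
Hypothesis c3 : #|t| = 3.

Lemma verts_1 : verts [set t] = t.
Proof. by rewrite /verts big_set1. Qed.

Lemma edges1 : edges [set t] = [set A : {set V} | A \subset t & #|A| == 2].
Proof.
apply/setP => e; rewrite !inE andbC; congr (_ && _); apply/existsP/idP.
  by move=> [u /andP]; rewrite inE => -[/eqP ->].
by move=> et; exists t; rewrite inE eqxx.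
Qed.

Lemma deg1 e : e \subset t -> edge_deg [set t] e = 1.
Proof.
move=> et; rewrite /edge_deg -(cards1 t); apply: eq_card => s; rewrite !inE.
by case: (eqVneq s t) => [-> |] //=; rewrite et.
Qed.

Lemma surf1 : tri_surface [set t].
Proof.
split.
- by apply/set0Pn; exists t; rewrite inE.
- by move=> u; rewrite inE => /eqP ->.
- move=> x y; rewrite verts_1 => xt yt; apply: connect1; apply/existsP; exists t.
  by rewrite inE eqxx xt yt.
- by move=> e; rewrite edges1 inE => /andP [et _]; left; apply: deg1.
- move=> v c d; rewrite verts_1 !inE => vt /andP [cv /existsP [u /andP [/[!inE] /eqP -> /andP [_ ct]]]].
  move=> /andP [dv /existsP [u' /andP [/[!inE] /eqP -> /andP [_ dt]]]].
  case: (eqVneq c d) => [-> | cd]; first exact: connect0.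
  by apply: connect1; apply/existsP; exists t; rewrite inE eqxx vt ct dt cv dv cd.
Qed.

Lemma disc1 : tri_disc [set t].
Proof.
split; first exact: surf1.
- case: (set_0Vmem t) => [E | [x xt]]; first by move: c3; rewrite E cards0.
  have [z zt zx] := other x c3.
  have xzt : [set x; z] \subset t.
    by apply/subsetP => w; rewrite !inE => /orP [] /eqP ->.
  apply/set0Pn; exists [set x; z]; rewrite in_set deg1 // eqxx andbT.
  have xz : x != z by rewrite eq_sym.
  by rewrite edges1 in_set xzt cards2 xz.
- rewrite /verts big_set1 cards1 edges1 cards_draws c3. by [].
Qed.

End One.

Lemma t_out T G t X : G \subset T -> tri_surface T -> tri_surface G -> t \in G ->
  (forall w, w \in t -> w \notin bd_verts G) -> X \subset T -> meet_ok G X ->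
  forall w, w \in t -> w \notin verts X.
Proof.
move=> GT sT sG tG tint XT mX w wt; apply/negP => /vertsP [u uX wu].
have wG : w \in verts G by apply/vertsP; exists t.
have uG := star GT sT sG wG (tint w wt) (subsetP XT u uX) wu.
case: mX => [/setP /(_ w) | [/setP /(_ u) GX _ _ _]].
  by rewrite !inE wG /=; have -> : w \in verts X by apply/vertsP; exists u.
by move: GX; rewrite !inE uG uX.
Qed.

Lemma disj1 t X : (forall w, w \in t -> w \notin verts X) ->
  cx_disjoint [set t] X /\ cx_disjoint X [set t].
Proof.
move=> tX; rewrite /cx_disjoint verts_1 setIC; split; apply/setP => w; rewrite !inE;
  by case wt: (w \in t); rewrite ?andbF // (negbTE (tX w wt)).
Qed.

End Proof.

Theorem mainTheorem5 (V : finType) (T G D : {set {set V}})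
    (Ds : seq {set {set V}}) :
  closed_surface T ->
  minimal_decomposition T G D Ds ->
  forall t, t \in G -> t :&: bd_verts G != set0.
Proof.
move=> [sT _] [[[[GT sG] [DT sD]] DsT [dD dDs] vmax [U M]] mn] t tG.
apply/negP => /eqP H0.
have tint : forall w, w \in t -> w \notin bd_verts G.
  move=> w wt; apply/negP => wb.
  have : w \in t :&: bd_verts G by rewrite inE wt wb.
  by rewrite H0 inE.
have tT : t \in T := subsetP GT t tG.
have c3 : #|t| = 3 := tri3 sG tG.
have tX : forall X : {set {set V}}, X \subset T -> meet_ok G X -> forall w, w \in t -> w \notin verts X.
  by move=> X XT mX; apply: (t_out GT sT sG tG tint XT mX).
have dec : decomposition T (G :\ t) D ([set t] :: Ds).
  split.
  - split; split => //; [exact: subset_trans (G'sub G t) GT | exact: surf'].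
  - move=> Di; rewrite in_cons => /orP [/eqP -> | /DsT //].
    by split; [rewrite sub1set | exact: surf1].
  - split => // Di; rewrite in_cons => /orP [/eqP -> | /dDs //]; exact: disc1.
  - exact: vmax.
  split.
    rewrite -U big_cons; set B := \bigcup_(Di <- Ds) Di.
    apply/setP => s; rewrite !inE; case: (eqVneq s t) => [-> | _] /=.
      by rewrite tG orbT.
    by [].
  move=> /= i j.
  have Dj : forall j, j < size Ds -> nth set0 Ds j \subset T.
    by move=> k hk; case: (DsT _ (mem_nth set0 hk)).
  case: i j => [|[|[|i]]] [|[|[|j]]] //= h.
  - apply: restrict => //; first exact: tX (M 0 1 isT).
    exact: (M 0 1 isT).
  - by right; apply: circle'.
  - have hj : j < size Ds by rewrite -ltnS -ltnS -ltnS.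
    apply: restrict => //; first exact: tX (Dj j hj) (M 0 j.+2 hj).
    exact: (M 0 j.+2 hj).
  - by left; case: (disj1 (tX D DT (M 0 1 isT))).
  - exact: (M 1 j.+2 h).
  - have hj : j < size Ds by rewrite -ltnS -ltnS -ltnS.
    by left; case: (disj1 (tX _ (Dj j hj) (M 0 j.+2 hj))).
  - exact: (M i.+2 j.+2 h).
have := mn _ _ _ dec; rewrite (cardsD1 t G) tG add1n.
by rewrite ltnn.
Qed.
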